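(* Let $P=P_1\times P_2$ with $P_1,P_2$ Cabanes $\ell$-groups, and let $A_i$ be the unique maximal abelian normal subgroup of $P_i$. Let $P_0$ be a normal subgroup of $P$ with $\pi_i(P_0)=P_i$ for $i=1,2$, where $\pi_i:P_1\times P_2\to P_i$ are the projections. Then $P_0$ is Cabanes, with unique maximal abelian normal subgroup $(A_1\times A_2)\cap P_0$.
   Context: An $\ell$-group is Cabanes if it has a unique maximal abelian normal subgroup. *)

(* Defs.v *)
From mathcomp Require Import all_boot all_fingroup all_solvable.
Set Implicit Arguments. Unset Strict Implicit. Unset Printing Implicit Defensive.
Local Open Scope group_scope.

Definition max_abelian_normal (gT : finGroupType) (G A : {group gT}) : Prop :=
  [max A | (A <| G) && abelian A].

Definition unique_max_abelian_normal (gT : finGroupType) (G A : {group gT}) : Prop :=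
  max_abelian_normal G A /\
  forall B : {group gT}, max_abelian_normal G B -> B = A.

Definition Cabanes (l : nat) (gT : finGroupType) (G : {group gT}) : Prop :=
  l.-group G /\ exists A : {group gT}, unique_max_abelian_normal G A.

(* Main.v *)
Require Import Defs.
From mathcomp Require Import all_boot all_fingroup all_solvable.
Set Implicit Arguments. Unset Strict Implicit. Unset Printing Implicit Defensive.
Local Open Scope group_scope.

Lemma uman_sub (gT : finGroupType) (G A B : {group gT}) :
  unique_max_abelian_normal G A -> B <| G -> abelian B -> B \subset A.
Proof.
move=> [_ uA] nB aB.
have gB : (B <| G) && abelian B by rewrite nB aB.
have [H maxH sBH] := @maxgroup_exists _ (fun H : {group gT} => (H <| G) && abelian H) B gB.
by rewrite -(uA H maxH).
Qed.

Lemma abelianX (gT1 gT2 : finGroupType) (A1 : {group gT1}) (A2 : {group gT2}) :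
  abelian A1 -> abelian A2 -> abelian (setX A1 A2).
Proof.
move=> /centsP a1 /centsP a2; apply/centsP => -[u1 u2] /setXP[x1 x2] -[v1 v2] /setXP[y1 y2].
rewrite /commute /mulg /=; congr (_, _).
- exact: a1.
- exact: a2.
Qed.

Theorem mainTheorem16 (l : nat) (gT1 gT2 : finGroupType)
    (P1 A1 : {group gT1}) (P2 A2 : {group gT2}) (P0 : {group (gT1 * gT2)%type}) :
  prime l ->
  Cabanes l P1 -> Cabanes l P2 ->
  unique_max_abelian_normal P1 A1 -> unique_max_abelian_normal P2 A2 ->
  P0 <| setX P1 P2 ->
  [set x.1 | x in P0] = P1 -> [set x.2 | x in P0] = P2 ->
  Cabanes l P0 /\
  unique_max_abelian_normal P0 (setX A1 A2 :&: P0)%G.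
Proof.
move=> pl [lP1 _] [lP2 _] U1 U2 nP0 e1 e2.
have f1 : fst_morphism gT1 gT2 @* P0 = P1 by rewrite morphimE setTI.
have f2 : snd_morphism gT1 gT2 @* P0 = P2 by rewrite morphimE setTI.
have [/maxgroupP[/andP[nA1 aA1] _] _] := U1.
have [/maxgroupP[/andP[nA2 aA2] _] _] := U2.
have key : forall B : {group (gT1 * gT2)%type}, B <| P0 -> abelian B ->
    B \subset setX A1 A2.
  move=> B nB aB.
  have s1 : fst_morphism gT1 gT2 @* B \subset A1.
    apply: uman_sub U1 _ (morphim_abelian _ aB).
    by rewrite -f1; apply: morphim_normal.
  have s2 : snd_morphism gT1 gT2 @* B \subset A2.
    apply: uman_sub U2 _ (morphim_abelian _ aB).
    by rewrite -f2; apply: morphim_normal.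
  apply/subsetP => x Bx; rewrite inE.
  have h1 : x.1 \in A1 by apply: (subsetP s1); apply: mem_morphim; rewrite ?inE.
  have h2 : x.2 \in A2 by apply: (subsetP s2); apply: mem_morphim; rewrite ?inE.
  by rewrite h1 h2.
have nC : (setX A1 A2 :&: P0)%G <| P0.
  rewrite /normal subsetIr /= normsI ?normG //.
  apply/subsetP => x Px; rewrite inE; apply/subsetP => y.
  rewrite mem_conjg => /setXP[y1 y2].
  have x1 : x.1 \in P1 by rewrite -e1; apply: imset_f.
  have x2 : x.2 \in P2 by rewrite -e2; apply: imset_f.
  have n1 : (x.1)^-1 \in 'N(A1) by rewrite groupV (subsetP (normal_norm nA1)).
  have n2 : (x.2)^-1 \in 'N(A2) by rewrite groupV (subsetP (normal_norm nA2)).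
  rewrite inE.
  have z1 : y.1 ^ (x.1)^-1 \in A1 by exact: y1.
  have z2 : y.2 ^ (x.2)^-1 \in A2 by exact: y2.
  by rewrite (memJ_norm _ n1) in z1; rewrite (memJ_norm _ n2) in z2; rewrite z1 z2.
have aC : abelian (setX A1 A2 :&: P0)%G.
  by apply: abelianS (subsetIl _ _) (abelianX aA1 aA2).
have gC : ((setX A1 A2 :&: P0)%G <| P0) && abelian (setX A1 A2 :&: P0)%G.
  by rewrite nC aC.
have maxC : max_abelian_normal P0 (setX A1 A2 :&: P0)%G.
  apply/maxgroupP; split => // H /andP[nH aH] sCH.
  apply/eqP; rewrite eqEsubset sCH andbT subsetI key //.
  exact: normal_sub.
have uC : forall B : {group (gT1 * gT2)%type}, max_abelian_normal P0 B ->
    B = (setX A1 A2 :&: P0)%G.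
  move=> B /maxgroupP[/andP[nB aB] mB].
  apply: val_inj; symmetry; apply: mB => //.
  by rewrite subsetI key // normal_sub.
split; last by split.
split; last by exists (setX A1 A2 :&: P0)%G; split.
apply: pgroupS (normal_sub nP0) _.
by rewrite /pgroup cardsX pnatM; apply/andP.
Qed.
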